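(* Let $q$ be a prime power, $s,\ell$ positive integers, $\alpha,\beta\in\{1,-1\}\subseteq\mathbb{F}_q$, $r$ the multiplicative order of $\beta$, and assume $q\equiv 1\pmod{r\ell}$. Let $\omega\in\mathbb{F}_q$ be a primitive $r\ell$-th root of unity with $\omega^\ell=\beta$, and $\eta_k(y)=\prod_{j\ne k,\,0\le j\le \ell-1}\frac{y-\omega^{1+jr}}{\omega^{1+kr}-\omega^{1+jr}}$ for $0\le k\le\ell-1$. Let $\mathcal{C}$ be an ideal of $\mathcal{R}=\mathbb{F}_q[x,y]/\langle x^s-\alpha,y^\ell-\beta\rangle$; for each $j$ let $p_j(x)$ be the monic divisor of $x^s-\alpha$ generating $I_j=\{f(x)\in\mathbb{F}_q[x]/\langle x^s-\alpha\rangle:\eta_j(y)f(x)\in\mathcal{C}\}$, $a_j=\deg p_j(x)$, and $p_j'(x)=(x^s-\alpha)/p_j(x)$. Then $\mathcal{C}$ is self-dual if and only if (i) $s\ell=2(a_0+a_1+\cdots+a_{\ell-1})$, and (ii) for every $k$, $0\le k\le \ell-1$, there exist nonzero polynomials $t_k(x),t_k'(x)\in\mathbb{F}_q[x]/\langle x^s-\alpha\rangle$ such that, in $\mathbb{F}_q[x]/\langle x^s-\alpha\rangle$, if $\beta=1$: $p_k'^*(x)=t_k(x)p_{\ell-2-k}(x)$ and $p_k(x)=t_k'(x)p'^*_{\ell-2-k}(x)$; if $\beta=-1$: $p_k'^*(x)=t_k(x)p_{\ell-1-k}(x)$ and $p_k(x)=t_k'(x)p'^*_{\ell-1-k}(x)$;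 where subscripts are read modulo $\ell$.
   Context: Elements of $\mathcal{R}$ are identified with vectors $(c_{i,j})$ of length $s\ell$ via the coefficients of $x^iy^j$ ($0\le i\le s-1$, $0\le j\le \ell-1$); ideals of $\mathcal{R}$ are two-dimensional $(\alpha,\beta)$-constacyclic codes. $\mathcal{C}^\perp$ denotes the Euclidean dual, and $\mathcal{C}$ is self-dual if $\mathcal{C}=\mathcal{C}^\perp$. For a nonzero polynomial $f$ of degree $k$, $f^*(x)=x^kf(1/x)$. *)

(* Defs.v *)
From HB Require Import structures.
From mathcomp Require Import all_boot all_order all_algebra.
Set Implicit Arguments. Unset Strict Implicit. Unset Printing Implicit Defensive.
Import Order.TTheory GRing.Theory.
Local Open Scope ring_scope.

Section TwoDimConstacyclic.
Variables (F : finFieldType) (s l : nat) (a b : F).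

Definition modx : {poly F} := 'X^s - a%:P.

(* Elements of R = F[x,y]/<x^s - a, y^l - b> are represented by their
   coefficient matrices (c_{i,j}), 0 <= i < s, 0 <= j < l (coefficient of x^i y^j).
   Bivariate polynomials are {poly {poly F}}: outer variable y, inner variable x. *)
Definition to_bipoly (c : 'M[F]_(s, l)) : {poly {poly F}} :=
  \sum_(i < s) \sum_(j < l) ((c i j)%:P * 'X^i)%:P * 'X^j.

Definition of_bipoly (P : {poly {poly F}}) : 'M[F]_(s, l) :=
  \matrix_(i < s, j < l) (P`_j)`_i.

Definition reduceR (P : {poly {poly F}}) : {poly {poly F}} :=
  map_poly (fun q : {poly F} => q %% modx) (P %% ('X^l - (b%:P)%:P)).

Definition Rmul (c d : 'M[F]_(s, l)) : 'M[F]_(s, l) :=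
  of_bipoly (reduceR (to_bipoly c * to_bipoly d)).

Definition elemR (f g : {poly F}) : 'M[F]_(s, l) :=
  of_bipoly (reduceR (f%:P * map_poly polyC g)).

(* Ideals of R (= two-dimensional (a,b)-constacyclic codes). *)
Definition is_ideal (C : {set 'M[F]_(s, l)}) : Prop :=
  [/\ 0 \in C,
      (forall c d, c \in C -> d \in C -> c + d \in C) &
      (forall r c, c \in C -> Rmul r c \in C)].

Definition dual (C : {set 'M[F]_(s, l)}) : {set 'M[F]_(s, l)} :=
  [set v : 'M[F]_(s, l) | [forall c in C, \sum_(i < s) \sum_(j < l) c i j * v i j == 0]].

Definition self_dual (C : {set 'M[F]_(s, l)}) : Prop := C = dual C.

End TwoDimConstacyclic.

Definition eta_poly (F : fieldType) (l r : nat) (w : F) (k : nat) : {poly F} :=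
  \prod_(j < l | j != k :> nat)
     (('X - (w ^+ (1 + j * r))%:P) *
      ((w ^+ (1 + k * r) - w ^+ (1 + j * r))^-1)%:P).

Definition recip (F : fieldType) (f : {poly F}) : {poly F} := Poly (rev f).

(* Main.v *)
Require Import Defs.
From HB Require Import structures.
From mathcomp Require Import all_boot all_order all_algebra.
From mathcomp Require Import zify.
Import Order.TTheory GRing.Theory.
Local Open Scope ring_scope.

Section Rev.
Context {F : fieldType}.

Definition revn (n : nat) (h : {poly F}) : {poly F} := \poly_(i < n) h`_(n.-1 - i).

Lemma coef_revn n h i : (revn n h)`_i = if (i < n)%N then h`_(n.-1 - i) else 0.
Proof. by rewrite coef_poly. Qed.

Lemma size_revn n h : (size (revn n h) <= n)%N.
Proof. exact: size_poly. Qed.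

Lemma revnK n (h : {poly F}) : (size h <= n)%N -> revn n (revn n h) = h.
Proof.
move=> hs; apply/polyP=> i; rewrite !coef_revn.
case: ifP => lin.
  have -> : (n.-1 - i < n)%N by rewrite (leq_ltn_trans (leq_subr _ _)) // prednK // (leq_ltn_trans _ lin).
  congr (_`_ _); rewrite subKn //; by rewrite -ltnS prednK // (leq_ltn_trans _ lin).
by rewrite nth_default // (leq_trans hs) // leqNgt lin.
Qed.

Lemma revnD n f g : revn n (f + g) = revn n f + revn n g.
Proof. by apply/polyP=> i; rewrite coefD !coef_revn coefD; case: ifP; rewrite ?addr0. Qed.

Lemma revn0 n : revn n 0 = 0.
Proof. by apply/polyP=> i; rewrite coef_revn !coef0; case: ifP. Qed.

Lemma revnZ n c f : revn n (c *: f) = c *: revn n f.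
Proof. by apply/polyP=> i; rewrite coefZ !coef_revn; case: ifP; rewrite ?coefZ ?mulr0. Qed.

Lemma revn_sum n (I : finType) (G : I -> {poly F}) :
  revn n (\sum_i G i) = \sum_i revn n (G i).
Proof. exact: (big_morph (revn n) (revnD n) (revn0 n)). Qed.

Lemma revnX n i : (i < n)%N -> revn n 'X^i = 'X^(n.-1 - i).
Proof.
move=> lin; apply/polyP=> k; rewrite coef_revn !coefXn.
have hn : (0 < n)%N by apply: leq_ltn_trans lin.
case: ifP => kn.
  have -> : ((n.-1 - k)%N == i) = (k == (n.-1 - i)%N).
    apply/idP/idP => /eqP H; apply/eqP.
      by rewrite -H subKn // -ltnS prednK.
    by rewrite H subKn // -ltnS prednK.
  by [].
case: eqP => // ek; move: kn; rewrite ek.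
by rewrite (leq_ltn_trans (leq_subr _ _)) // prednK.
Qed.

Lemma poly_wide {n} {f : {poly F}} : (size f <= n)%N -> f = \sum_(i < n) f`_i *: 'X^i.
Proof. by move=> hs; rewrite -poly_def; apply/polyP=> i; rewrite coef_poly; case: ltnP => // h; rewrite nth_default // (leq_trans hs). Qed.

Lemma revn_expand {n} {f : {poly F}} : (size f <= n)%N ->
  revn n f = \sum_(i < n) f`_i *: 'X^(n.-1 - i).
Proof.
move=> hf; rewrite {1}(poly_wide hf) revn_sum; apply: eq_bigr => i _.
by rewrite revnZ revnX.
Qed.

Lemma revnM n m (f g : {poly F}) : (size f <= n)%N -> (size g <= m)%N ->
  revn (n + m).-1 (f * g) = revn n f * revn m g.
Proof.
move=> hf hg.
rewrite {1}(poly_wide hf) {1}(poly_wide hg) big_distrl /=.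
under eq_bigr do rewrite big_distrr /=.
rewrite revn_sum (revn_expand hf) (revn_expand hg) big_distrl /=.
apply: eq_bigr => i _; rewrite revn_sum big_distrr /=; apply: eq_bigr => j _.
have hi := ltn_ord i; have hj := ltn_ord j.
rewrite -scalerAr -scalerAl revnZ -scalerAr -scalerAl revnZ -exprD revnX; last by lia.
by rewrite -exprD; congr (_ *: (_ *: GRing.exp _ _)); lia.
Qed.

Lemma recip_revn (f : {poly F}) : recip f = revn (size f) f.
Proof.
apply/polyP=> i; rewrite coef_revn /recip coef_Poly.
case: ltnP => hi.
  by rewrite nth_rev // subnS -!subn1 subnAC.
by rewrite nth_default // size_rev.
Qed.

Lemma size_recip (f : {poly F}) : f`_0 != 0 -> size (recip f) = size f.
Proof.
move=> h0; rewrite recip_revn /revn size_poly_eq //.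
rewrite subnn //.
Qed.

Lemma revnK_recip (f : {poly F}) : revn (size f) (recip f) = f.
Proof. by rewrite recip_revn revnK. Qed.

Lemma dvd_revn n s (u h : {poly F}) : u != 0 -> size u = n -> (size h <= s)%N ->
  u %| h -> revn n u %| revn s h.
Proof.
move=> u0 su hs /dvdpP [q hq].
have [q00|q0] := eqVneq q 0.
  by rewrite hq q00 mul0r revn0 dvdp0.
have sq : size h = (size q + n).-1 by rewrite hq size_mul // su.
have n1 : (0 < n)%N by rewrite -su size_poly_gt0.
have q1 : (0 < size q)%N by rewrite size_poly_gt0.
have -> : s = (n + (s - n).+1).-1 by lia.
by rewrite hq mulrC revnM ?su ?dvdp_mulIl //; lia.
Qed.

End Rev.
Require Import Defs.
From HB Require Import structures.
From mathcomp Require Import all_boot all_order all_algebra zify.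
Import Order.TTheory GRing.Theory.
Local Open Scope ring_scope.

Section Gen.
Variable R : nzRingType.

Lemma sumX_coef n (x : 'I_n -> R) (k : 'I_n) : (\sum_(i < n) x i *: 'X^i)`_k = x k.
Proof.
rewrite coef_sum (bigD1 k) //= coefZ coefXn eqxx mulr1 big1 ?addr0 // => i ik.
by rewrite coefZ coefXn (_ : (k == i :> nat) = false) ?mulr0 //; apply/negbTE; rewrite eq_sym; exact: ik.
Qed.

Lemma sumX_size {n} (x : 'I_n -> R) : (size (\sum_(i < n) x i *: 'X^i)%R <= n)%N.
Proof.
apply: (leq_trans (size_sum _ _ _)); apply/bigmax_leqP => i _.
by apply: (leq_trans (size_scale_leq _ _)); rewrite size_polyXn.
Qed.

Lemma sumX_coef_ge n (x : 'I_n -> R) k : (n <= k)%N -> (\sum_(i < n) x i *: 'X^i)`_k = 0.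
Proof. by move=> h; rewrite nth_default // (leq_trans (sumX_size x)). Qed.
End Gen.

Section Main.
Variables (F : finFieldType) (s l r : nat) (a b w : F).
Hypotheses (s0 : (0 < s)%N) (l0 : (0 < l)%N).
Hypothesis a2 : a * a = 1.
Hypothesis wl : w ^+ l = b.
Hypothesis prim : (r * l).-primitive_root w.
Hypothesis r0 : (0 < r)%N.
Hypothesis hr : r.-primitive_root b.
Hypothesis hb : b = 1 \/ b = -1.
Hypothesis hq : #|F| = 1 %[mod r * l].

Local Notation m := (modx s a).
Implicit Types (c d : 'M[F]_(s, l)).
Definition lam (k : nat) : F := w ^+ (1 + k * r).
Definition phi (k : nat) (c : 'M[F]_(s, l)) : {poly F} := (to_bipoly c).[(lam k)%:P].

Lemma size_m : size m = s.+1.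
Proof. by rewrite /modx size_polyDl ?size_polyXn // size_polyN size_polyC ltnS; case: (a != 0). Qed.

Lemma m_neq0 : m != 0.
Proof. by rewrite -size_poly_gt0 size_m. Qed.

Lemma w_rl : w ^+ (r * l) = 1.
Proof. exact: prim_expr_order. Qed.

Lemma lamXl k : lam k ^+ l = b.
Proof.
rewrite /lam -exprM mulnDl mul1n exprD wl.
have -> : (k * r * l = r * l * k)%N by lia.
by rewrite exprM w_rl expr1n mulr1.
Qed.

Lemma to_bipolyE (c : 'M[F]_(s, l)) :
  to_bipoly c = \sum_(j < l) (\sum_(i < s) c i j *: 'X^i) *: 'X^j.
Proof.
rewrite /to_bipoly exchange_big /=; apply: eq_bigr => j _.
rewrite scaler_suml; apply: eq_bigr => i _.
by rewrite mul_polyC mul_polyC.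
Qed.

Lemma coef_to_bipoly (c : 'M[F]_(s, l)) (i : 'I_s) (j : 'I_l) : ((to_bipoly c)`_j)`_i = c i j.
Proof. by rewrite to_bipolyE sumX_coef sumX_coef. Qed.

Lemma to_of_bipoly (Q : {poly {poly F}}) : (size Q <= l)%N ->
  (forall j : nat, (size (Q`_j)%R <= s)%N) -> to_bipoly (of_bipoly s l Q) = Q.
Proof.
move=> hQ hj; apply/polyP => j; rewrite to_bipolyE.
case: (ltnP j l) => jl; last by rewrite sumX_coef_ge // nth_default // (leq_trans hQ).
rewrite (@sumX_coef _ _ _ (Ordinal jl)) /= [RHS](poly_wide (hj j)).
by apply: eq_bigr => i _; rewrite mxE.
Qed.

Lemma phiE k (c : 'M[F]_(s, l)) : phi k c = \sum_(j < l) (lam k ^+ j) *: (\sum_(i < s) c i j *: 'X^i).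
Proof.
rewrite /phi to_bipolyE horner_sum; apply: eq_bigr => j _.
by rewrite hornerZ hornerXn -rmorphXn /= mulrC mul_polyC.
Qed.

Lemma coef_phi k (c : 'M[F]_(s, l)) (i : 'I_s) : (phi k c)`_i = \sum_(j < l) c i j * lam k ^+ j.
Proof.
rewrite phiE coef_sum; apply: eq_bigr => j _.
by rewrite coefZ sumX_coef mulrC.
Qed.

Lemma size_phi k (c : 'M[F]_(s, l)) : (size (phi k c) <= s)%N.
Proof.
rewrite phiE; apply: (leq_trans (size_sum _ _ _)); apply/bigmax_leqP => j _.
exact: (leq_trans (size_scale_leq _ _) (sumX_size _ _)).
Qed.

Lemma phiD k (c d : 'M[F]_(s, l)) : phi k (c + d) = phi k c + phi k d.
Proof.
rewrite !phiE -big_split /=; apply: eq_bigr => j _.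
rewrite -scalerDr -big_split /=; congr (_ *: _); apply: eq_bigr => i _.
by rewrite mxE scalerDl.
Qed.

Lemma phi0 k : phi k (0 : 'M[F]_(s, l)) = 0.
Proof.
rewrite phiE big1 // => j _; rewrite big1 ?scaler0 // => i _.
by rewrite mxE scale0r.
Qed.

Lemma phiN k (c : 'M[F]_(s, l)) : phi k (- c) = - phi k c.
Proof. by apply/eqP; rewrite -subr_eq0 opprK -phiD addNr phi0. Qed.

Lemma phi_sum k (I : finType) (G : I -> 'M[F]_(s, l)) :
  phi k (\sum_i G i) = \sum_i phi k (G i).
Proof. exact: (big_morph (phi k) (phiD k) (phi0 k)). Qed.

Lemma size_map_le (f : {poly F} -> {poly F}) (Q : {poly {poly F}}) :
  (size (map_poly f Q) <= size Q)%N.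
Proof. by rewrite /map_poly; exact: size_poly. Qed.

Lemma modp_sum (I : finType) (G : I -> {poly F}) (d : {poly F}) :
  (\sum_i G i) %% d = \sum_i (G i %% d).
Proof. exact: (big_morph (fun p => p %% d) (fun p q => modpD d p q) (mod0p d)). Qed.

Lemma horner_mapmod (Q : {poly {poly F}}) (c : F) :
  (map_poly (fun q => q %% m) Q).[c%:P] %% m = Q.[c%:P] %% m.
Proof.
rewrite (horner_coef_wide _ (size_map_le _ Q)) (horner_coef_wide _ (leqnn (size Q))).
rewrite !modp_sum; apply: eq_bigr => i _.
by rewrite coef_map_id0 ?mod0p // mulrC modp_mul mulrC.
Qed.

Lemma phi_reduce k (P : {poly {poly F}}) :
  phi k (of_bipoly s l (reduceR s l a b P)) = P.[(lam k)%:P] %% m.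
Proof.
set d : {poly {poly F}} := 'X^l - (b%:P)%:P.
have dm : d \is monic by apply: monicXnsubC.
have d0 : d != 0 by apply: monic_neq0.
have sd : size d = l.+1 by rewrite /d size_polyDl ?size_polyXn // size_polyN size_polyC ltnS; case: (_ != 0).
set Q := P %% d.
have sQ : (size Q <= l)%N by rewrite -ltnS -sd ltn_modp.
set R := map_poly (fun q => q %% m) Q.
have sR : (size R <= l)%N by apply: leq_trans (size_map_le _ _) sQ.
have cR : forall j : nat, (size (R`_j)%R <= s)%N.
  move=> j; rewrite coef_map_id0 ?mod0p // -ltnS -size_m ltn_modp.
  exact: m_neq0.
have E : phi k (of_bipoly s l R) = R.[(lam k)%:P] by rewrite /phi to_of_bipoly.
rewrite /reduceR -/d -/Q -/R.
rewrite -(modp_small (_ : size (phi k (of_bipoly s l R)) < size m)%N); last first.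
  by rewrite size_m ltnS size_phi.
rewrite E horner_mapmod; congr (_ %% _).
have := Pdiv.Idomain.divp_eq P d; rewrite (monicP dm) expr1n scale1r => ->.
rewrite hornerD hornerM /d !hornerE -rmorphXn /= lamXl subrr.
by rewrite mulr0 add0r.
Qed.

Lemma phi_Rmul k (c d : 'M[F]_(s, l)) :
  phi k (Rmul a b c d) = (phi k c * phi k d) %% m.
Proof. by rewrite /Rmul phi_reduce hornerM. Qed.

Lemma phi_elemR k (f g : {poly F}) :
  phi k (@elemR F s l a b f g) = (f * (g.[lam k])%:P) %% m.
Proof.
rewrite /elemR phi_reduce hornerCM; congr (_ * _ %% _).
exact: (horner_map polyC).
Qed.


Lemma lam_inj k1 k2 : (k1 < l)%N -> (k2 < l)%N -> lam k1 = lam k2 -> k1 = k2.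
Proof.
move=> h1 h2 /eqP; rewrite /lam (eq_prim_root_expr prim) eqn_modDl.
rewrite (mulnC r l) -!muln_modl eqn_pmul2r // !modn_small //.
by move/eqP.
Qed.

Lemma b2 : b * b = 1.
Proof. by case: hb => ->; rewrite ?mulr1 ?mulrNN ?mulr1. Qed.

Lemma eta_eval k i : (k < l)%N -> (i < l)%N ->
  (eta_poly l r w k).[lam i] = (i == k)%:R.
Proof.
move=> hk hi; rewrite /eta_poly horner_prod.
case: eqP => [->|ne].
  rewrite big1 // => j jk; rewrite hornerM hornerXsubC hornerC divff //.
  rewrite subr_eq0; apply/eqP => /lam_inj E.
  by move/eqP: jk; apply; rewrite E.
rewrite (bigD1 (Ordinal hi)) /=; last by apply/eqP.
by rewrite hornerM hornerXsubC hornerC subrr mul0r mul0r.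
Qed.

Lemma phi_inj c : (forall k, (k < l)%N -> phi k c = 0) -> c = 0.
Proof.
move=> h; apply/matrixP => i j; rewrite mxE.
set P := \sum_(j < l) c i j *: ('X^j : {poly F}).
have hP : forall k, (k < l)%N -> P.[lam k] = 0.
  move=> k hk; have := congr1 (fun p : {poly F} => p`_i) (h k hk).
  rewrite /= coef_phi coef0 => <-; rewrite /P horner_sum.
  by apply: eq_bigr => j' _; rewrite hornerZ hornerXn.
have -> : c i j = P`_j by rewrite /P sumX_coef.
suff -> : P = 0 by rewrite coef0.
apply/eqP; apply/negPn/negP => P0.
have := max_poly_roots P0 (rs := [seq lam k | k <- iota 0 l]).
rewrite size_map size_iota ltnNge (sumX_size _ _) /= => H; suff : false by []; apply: H.
  by apply/allP => x /mapP [k]; rewrite mem_iota add0n => hk ->; apply/eqP; apply: hP.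
rewrite map_inj_in_uniq ?iota_uniq // => x y; rewrite !mem_iota !add0n.
by move=> /andP [_ hx] /andP [_ hy]; apply: lam_inj.
Qed.

Definition kp (k : nat) : nat :=
  if b == 1 then ((2 * l - 2 - k) %% l)%N else ((l - 1 - k) %% l)%N.

Lemma kp_lt k : (kp k < l)%N.
Proof. by rewrite /kp; case: ifP => _; rewrite ltn_pmod. Qed.

Lemma lam_kp k : (k < l)%N -> lam k * lam (kp k) = 1.
Proof.
move=> hk; rewrite /lam -exprD; apply/eqP; rewrite -(prim_order_dvd prim).
rewrite /kp; case: ifP => b1.
  have r1 : r = 1%N.
    by apply/eqP; rewrite -dvdn1 (prim_order_dvd hr) expr1 b1.
  rewrite r1 mul1n !muln1.
  have -> : (1 + k + (1 + (2 * l - 2 - k) %% l) = (2 + k + (2 * l - 2 - k) %% l))%N by lia.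
  rewrite /dvdn modnDmr.
  have -> : (2 + k + (2 * l - 2 - k) = 2 * l)%N by lia.
  by rewrite modnMl; lia.
have r2 : r = 2%N.
  have d2 : (r %| 2)%N by rewrite (prim_order_dvd hr) expr2 b2.
  have n1 : r != 1%N by apply/eqP => r1; move: b1; rewrite -[b]expr1 -(prim_order_dvd hr) r1.
  have := dvdn_leq (isT : (0 < 2)%N) d2; move: n1 r0; lia.
rewrite r2 modn_small; last by lia.
have -> : (1 + k * 2 + (1 + (l - 1 - k) * 2) = 2 * l)%N by lia.
by rewrite dvdnn.
Qed.

Lemma kp_inv k : (k < l)%N -> kp (kp k) = k.
Proof.
move=> hk; apply: lam_inj => //; first exact: kp_lt.
have h1 := lam_kp _ hk; have h2 := lam_kp _ (kp_lt k).
by rewrite -[lam k]mulr1 -h2 mulrA h1 mul1r.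
Qed.


Lemma sum_lam j j' : (j < l)%N -> (j' < l)%N ->
  \sum_(k < l) lam k ^+ j * lam (kp k) ^+ j' = if j == j' then l%:R else 0.
Proof.
move=> hj hj'.
set e := (j + (l - j'))%N.
have E : forall k : 'I_l, lam k ^+ j * lam (kp k) ^+ j' = b * w ^+ e * (w ^+ (r * e)) ^+ k.
  move=> k.
  have -> : lam (kp k) ^+ j' = lam k ^+ (l - j') * b.
    rewrite -[lam (kp k) ^+ j']mulr1 -(expr1n _ (l - j')) -(lam_kp _ (ltn_ord k)).
    by rewrite exprMn mulrCA -exprD subnKC ?(ltnW hj') // lamXl.
  rewrite mulrA -exprD -/e mulrC -mulrA; congr (_ * _).
  rewrite /lam -!exprM -exprD; congr (_ ^+ _); lia.
rewrite (eq_bigr _ (fun k _ => E k)) -big_distrr /=.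
case: eqP => [jj|ne].
  have -> : e = l by rewrite /e jj subnKC // ltnW.
  rewrite (prim_expr_order prim).
  under eq_bigr do rewrite expr1n.
  by rewrite sumr_const card_ord wl b2 mul1r.
set z := w ^+ (r * e).
have z1 : z ^+ l = 1 by rewrite /z -exprM mulnAC exprM (prim_expr_order prim) expr1n.
have zn1 : z != 1.
  rewrite /z -(prim_order_dvd prim) dvdn_pmul2l //.
  apply/negP => dv.
  have e0 : (0 < e)%N by rewrite /e; lia.
  have e2 : (e < 2 * l)%N by rewrite /e; lia.
  have el : e != l by apply/eqP; rewrite /e => H; apply: ne; lia.
  case: (ltngtP e l) => [lt|gt|eq].
  - by have := dvdn_leq e0 dv; lia.
  - have : (l %| e - l)%N by rewrite dvdn_sub.
    move/(dvdn_leq); rewrite subn_gt0 => /(_ gt); lia.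
  - by move: el; rewrite eq eqxx.
have : z ^+ l - 1 = 0 by rewrite z1 subrr.
rewrite subrX1 => /eqP; rewrite mulf_eq0 subr_eq0 (negbTE zn1) /= => /eqP ->.
by rewrite mulr0.
Qed.


Definition dot (u h : {poly F}) : F := \sum_(i < s) u`_i * h`_i.

Lemma pairing (c v : 'M[F]_(s, l)) : l%:R * (\sum_(i < s) \sum_(j < l) c i j * v i j) =
  \sum_(k < l) dot (phi k c) (phi (kp k) v).
Proof.
rewrite /dot [RHS]exchange_big /= mulr_sumr; apply: eq_bigr => i _.
apply/esym.
under eq_bigr do rewrite !coef_phi big_distrl /=.
under eq_bigr do under eq_bigr do rewrite big_distrr /=.
rewrite exchange_big /= mulr_sumr; apply: eq_bigr => j _.
rewrite exchange_big /=.
have E : forall j' : 'I_l, \sum_(k < l) c i j * lam k ^+ j * (v i j' * lam (kp k) ^+ j') =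
   c i j * v i j' * (if j == j' then l%:R else 0).
  move=> j'; rewrite -(sum_lam _ _ (ltn_ord j) (ltn_ord j')) mulr_sumr.
  by apply: eq_bigr => k _; rewrite mulrACA.
rewrite (eq_bigr _ (fun j' _ => E j')) (bigD1 j) //= eqxx big1 ?addr0.
  by rewrite mulrC.
move=> j' ne; case: eqP => [E'|]; last by rewrite mulr0.
by move: ne; rewrite -val_eqE /= E' eqxx.
Qed.


Lemma card_F0 : (#|F|%:R : F) = 0.
Proof.
have E : \sum_(x : F) x = \sum_(x : F) (x + 1).
  by rewrite [LHS](reindex_inj (@addIr F 1)).
move: E; rewrite big_split /= sumr_const => /eqP.
by rewrite -subr_eq0 opprD addrA subrr sub0r oppr_eq0 => /eqP.
Qed.

Lemma l_neq0 : (l%:R : F) != 0.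
Proof.
have [d1|d2] := leqP (r * l) 1.
  have -> : l = 1%N by move: d1 r0 l0; clear; nia.
  exact: oner_neq0.
have := card_F0; rewrite (divn_eq #|F| (r * l)) hq modn_small //.
rewrite natrD !natrM => H; apply/eqP => l0'.
by move: H; rewrite l0' !mulr0 add0r => /eqP; rewrite oner_eq0.
Qed.



Lemma a_neq0 : a != 0.
Proof. by apply/eqP => a0; move: a2; rewrite a0 mul0r => /eqP; rewrite eq_sym oner_eq0. Qed.

Lemma dot_coef (u h : {poly F}) : (size u <= s)%N -> (size h <= s)%N ->
  dot u h = ((u * revn s h) %% m)`_(s.-1).
Proof.
move=> hu hh.
set W := u * revn s h.
have sW : (size W <= (s + s).-1)%N.
  apply: (leq_trans (size_mul_leq _ _)).
  have := size_revn s h; move: hu; move: (size u) (size (revn s h)) => x y; lia.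
have sQ : (size (W %/ m)%R <= s.-1)%N.
  rewrite size_divp ?m_neq0 // size_m /=; move: sW; move: (size W) => x; lia.
have E := divp_eq W m.
have -> : (W %% m)`_(s.-1) = W`_(s.-1).
  rewrite {2}E coefD.
  rewrite /modx mulrBr coefB coefMXn ltn_predL s0 mulrC coefCM.
  by rewrite [(W %/ m)`_ _]nth_default // mulr0 subrr add0r.
rewrite /W coefM prednK //.
rewrite /dot; apply: eq_bigr => j _.
rewrite coef_revn (leq_ltn_trans (leq_subr _ _)) ?prednK //.
congr (_ * _`_ _); have := ltn_ord j; clear; lia.
Qed.

Lemma nondeg (W : {poly F}) :
  (forall g : {poly F}, ((g * W) %% m)`_(s.-1) = 0) -> W %% m = 0.
Proof.
move=> h; set z := W %% m.
have sz : (size z <= s)%N by rewrite -ltnS -size_m ltn_modp m_neq0.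
apply/eqP; apply/negPn/negP => z0.
have zpos : (0 < size z)%N by rewrite size_poly_gt0.
set i := (size z).-1.
have zi : z`_i != 0 by rewrite -lead_coefE lead_coef_eq0.
have hi : (i < s)%N.
  by rewrite /i; move: sz zpos; move: (size z) => x; lia.
have := h ('X^(s.-1 - i)).
rewrite -modp_mul -/z mulrC modp_small; last first.
  rewrite size_m ltnS; apply: (leq_trans (size_mul_leq _ _)); rewrite size_polyXn.
  by move: hi zpos; rewrite /i; move: (size z) => x; lia.
rewrite coefMXn; have -> : (s.-1 < s.-1 - i)%N = false by clear; lia.
have -> : (s.-1 - (s.-1 - i) = i)%N by move: hi; clear; lia.
by move/eqP: zi.
Qed.

Lemma revn_m : revn s.+1 m = (- a) *: m.
Proof.
apply/polyP => i; rewrite coef_revn coefZ /modx !coefB !coefXn !coefC.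
rewrite [s.+1.-1]/=.
have sn0 : (s == 0)%N = false by move: s0; clear; case: s.
case: ltnP => hi; last first.
  have e1 : (i == s)%N = false by move: hi; clear; lia.
  have e2 : (i == 0)%N = false by move: hi; clear; lia.
  by rewrite e1 e2 subrr mulr0.
have [->|i0] := eqVneq i 0%N.
  by rewrite subn0 eqxx sn0 eq_sym sn0 subr0 sub0r mulrNN a2.
rewrite subr0.
case: (eqVneq i s) => [->|ne].
  by rewrite subnn eqxx eq_sym sn0 sub0r mulr1.
have e1 : (s - i == s)%N = false by move: hi i0 ne; clear; lia.
have e2 : (s - i == 0)%N = false by move: hi i0 ne; clear; lia.
by rewrite e1 e2 subrr mulr0.
Qed.

Lemma dvd_recip_m (u : {poly F}) : u %| m -> recip u %| m.
Proof.
move=> um.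
have u0 : u != 0 by apply: contraTneq um => ->; rewrite dvd0p m_neq0.
have hs : (size m <= s.+1)%N by rewrite size_m.
have := dvd_revn _ _ _ _ u0 (erefl _) hs um.
by rewrite revn_m dvdpZr ?oppr_eq0 ?a_neq0 // -recip_revn.
Qed.

Lemma coef0_div (u : {poly F}) : u %| m -> u`_0 != 0.
Proof.
move=> um; apply/eqP => u00.
have := divpK um; move/(congr1 (horner^~ 0)).
rewrite hornerM [u.[0]]horner_coef0 u00 mulr0 horner_coef0 /modx coefB coefXn coefC.
rewrite (_ : (0 == s)%N = false); last by move: s0; clear; case: s.
by rewrite eqxx sub0r => /eqP; rewrite eq_sym oppr_eq0 (negbTE a_neq0).
Qed.

Lemma recip_dvd (d h : {poly F}) : d %| m -> (size h <= s)%N ->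
  (d %| revn s h) = (recip d %| h).
Proof.
move=> dm hs.
have d0 : d != 0 by apply: contraTneq dm => ->; rewrite dvd0p m_neq0.
have c0 := coef0_div _ dm.
have sr : size (recip d) = size d by rewrite size_recip.
apply/idP/idP => H.
  have := dvd_revn _ _ _ _ d0 (erefl _) (size_revn s h) H.
  by rewrite revnK // -recip_revn.
have r0' : recip d != 0 by rewrite -size_poly_gt0 sr size_poly_gt0.
have := dvd_revn _ _ _ _ r0' sr hs H.
by rewrite recip_revn revnK.
Qed.

Variable C : {set 'M[F]_(s, l)}.
Variable p : nat -> {poly F}.
Hypothesis hC : is_ideal a b C.
Hypothesis hp : forall j, (j < l)%N ->
     [/\ p j \is monic, p j %| m &
         forall f : {poly F}, (size f <= s)%N ->
           (@elemR F s l a b f (eta_poly l r w j) \in C <->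
            exists g : {poly F}, f = (g * p j) %% m)].

Local Notation eta k := (eta_poly l r w k).

Lemma phi_elemR_eta j k (f : {poly F}) : (j < l)%N -> (k < l)%N -> (size f <= s)%N ->
  phi j (@elemR F s l a b f (eta k)) = if j == k then f else 0.
Proof.
move=> hj hk hf; rewrite phi_elemR eta_eval //.
case: eqP => _; last by rewrite mulr0 mod0p.
by rewrite mulr1 modp_small // size_m ltnS.
Qed.

Lemma phi_ext c d : (forall j, (j < l)%N -> phi j c = phi j d) -> c = d.
Proof.
move=> h; apply/eqP; rewrite -subr_eq0; apply/eqP; apply: phi_inj => j hj.
by rewrite phiD phiN h // subrr.
Qed.

Lemma pk_dvd (k : nat) (f : {poly F}) : (k < l)%N -> (size f <= s)%N -> p k %| f ->
  @elemR F s l a b f (eta k) \in C.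
Proof.
move=> hk hf pf; have [_ _ H] := hp _ hk; apply/(H _ hf).
by exists (f %/ p k); rewrite divpK // modp_small // size_m ltnS.
Qed.

Lemma sum_inC (G : 'I_l -> 'M[F]_(s, l)) : (forall k, G k \in C) -> \sum_k G k \in C.
Proof.
case: hC => h0 hD _ hG.
by apply: (big_ind (fun x => x \in C)) => // x y; apply: hD.
Qed.

Lemma inC_iff c : c \in C <-> (forall k, (k < l)%N -> p k %| phi k c).
Proof.
split.
  move=> cC k hk; have [_ pm H] := hp _ hk.
  set R := Rmul a b (@elemR F s l a b 1 (eta k)) c.
  have RC : R \in C by case: hC => _ _ ->.
  have E : R = @elemR F s l a b (phi k c) (eta k).
    apply: phi_ext => j hj.
    have s1 : (size (1%R : {poly F}) <= s)%N by rewrite size_poly1.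
    rewrite phi_Rmul (phi_elemR_eta _ _ _ hj hk s1) (phi_elemR_eta _ _ _ hj hk (size_phi k c)).
    case: eqP => [->|_]; last by rewrite mul0r mod0p.
    by rewrite mul1r modp_small // size_m ltnS size_phi.
  have := (H _ (size_phi k c)).1; rewrite -E => /(_ RC) [g ->].
  by rewrite -(dvdp_mod _ pm) dvdp_mull.
move=> h.
have -> : c = \sum_(k < l) @elemR F s l a b (phi k c) (eta k).
  apply: phi_ext => j hj; rewrite phi_sum (bigD1 (Ordinal hj)) //=.
  rewrite phi_elemR_eta ?size_phi // eqxx big1 ?addr0 // => k kj.
  rewrite phi_elemR_eta ?size_phi //; case: eqP => // E.
  by move: kj; rewrite -val_eqE /= -E eqxx.
by apply: sum_inC => k; apply: pk_dvd; rewrite ?size_phi ?h.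
Qed.



Lemma p_neq0 k : (k < l)%N -> p k != 0.
Proof. by move=> hk; have [mo _ _] := hp _ hk; apply: monic_neq0. Qed.

Lemma p_dvd k : (k < l)%N -> p k %| m.
Proof. by move=> hk; have [_ pm _] := hp _ hk. Qed.

Lemma pp_dvd k : (k < l)%N -> m %/ p k %| m.
Proof. by move=> hk; apply: divp_dvd; apply: p_dvd. Qed.

Lemma indual v : v \in dual C <->
  (forall k, (k < l)%N -> recip (m %/ p k) %| phi (kp k) v).
Proof.
rewrite inE; split.
  move/forall_inP => H k hk.
  set h := phi (kp k) v.
  rewrite -recip_dvd ?pp_dvd ?size_phi //.
  rewrite -(dvdp_mul2l _ _ (p_neq0 _ hk)) divpKC ?p_dvd //.
  apply/modp_eq0P; apply: nondeg => g.
  set c := @elemR F s l a b ((g * p k) %% m) (eta k).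
  have sg : (size ((g * p k) %% m)%R <= s)%N by rewrite -ltnS -size_m ltn_modp m_neq0.
  have cC : c \in C by apply: pk_dvd => //; rewrite -dvdp_mod ?p_dvd // dvdp_mull.
  have := H c cC => /eqP E.
  have := pairing c v; rewrite E mulr0.
  rewrite (bigD1 (Ordinal hk)) //= big1 ?addr0; last first.
    move=> j jk; rewrite phi_elemR_eta //; case: eqP => [E'|_].
      by move: jk; rewrite -val_eqE /= E' eqxx.
    by rewrite /dot big1 // => i _; rewrite coef0 mul0r.
  rewrite phi_elemR_eta // eqxx dot_coef ?size_phi // => E0.
  rewrite [RHS]E0.
  suff -> : (g * (p k * revn s h)) %% m = ((g * p k) %% m * revn s h) %% m by [].
  by rewrite (mulrC ((g * p k) %% m)) modp_mul mulrA (mulrC (revn s h)).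
move=> H; apply/forall_inP => c /inC_iff Hc.
have E := pairing c v; rewrite [X in _ = X]big1 in E.
  have : l%:R * (\sum_(i < s) \sum_(j < l) c i j * v i j) == 0 by rewrite E.
  by rewrite mulf_eq0 (negbTE l_neq0).
move=> k _; have hk := ltn_ord k.
rewrite dot_coef ?size_phi // modp_eq0 ?coef0 //.
rewrite -(divpKC (p_dvd _ hk)); apply: dvdp_mul; first exact: Hc.
by rewrite recip_dvd ?pp_dvd ?size_phi //; apply: H.
Qed.

Local Notation q j := (recip (m %/ p (kp j))).

Lemma q_dvd j : (j < l)%N -> q j %| m.
Proof. by move=> hj; apply: dvd_recip_m; apply: pp_dvd; apply: kp_lt. Qed.

Lemma indual' v : v \in dual C <-> (forall j, (j < l)%N -> q j %| phi j v).
Proof.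
rewrite indual; split => H j hj.
  by have := H _ (kp_lt j); rewrite kp_inv.
by have := H _ (kp_lt j); rewrite kp_inv.
Qed.

Lemma selfdual_iff : self_dual C <-> (forall j, (j < l)%N -> p j %= q j).
Proof.
split.
  move=> SD j hj.
  have smod : forall f : {poly F}, (size (f %% m)%R <= s)%N.
    by move=> f; rewrite -ltnS -size_m ltn_modp m_neq0.
  apply/andP; split.
    set v := @elemR F s l a b (q j %% m) (eta j).
    have : v \in dual C.
      apply/indual' => i hi; rewrite phi_elemR_eta //.
      case: eqP => [->|_]; last exact: dvdp0.
      by rewrite -dvdp_mod ?q_dvd.
    rewrite /self_dual in SD; rewrite -SD => /inC_iff /(_ _ hj).
    by rewrite phi_elemR_eta // eqxx -dvdp_mod ?p_dvd.
  set v := @elemR F s l a b (p j %% m) (eta j).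
  have : v \in C by apply: pk_dvd => //; rewrite -dvdp_mod ?p_dvd.
  rewrite /self_dual in SD; rewrite SD => /indual' /(_ _ hj).
  by rewrite phi_elemR_eta // eqxx -dvdp_mod ?q_dvd.
move=> H; apply/setP => v; apply/idP/idP.
  move/inC_iff => Hv; apply/indual' => j hj.
  by rewrite -(eqp_dvdl _ (H _ hj)); apply: Hv.
move/indual' => Hv; apply/inC_iff => j hj.
by rewrite (eqp_dvdl _ (H _ hj)); apply: Hv.
Qed.



Lemma size_q j : (j < l)%N -> size (q j) = (s.+1 - (size (p (kp j))).-1)%N.
Proof.
move=> hj; have hk := kp_lt j.
rewrite size_recip; last by apply: coef0_div; apply: pp_dvd.
by rewrite size_divp ?p_neq0 // size_m.
Qed.

Lemma size_p_bounds j : (j < l)%N -> (0 < size (p j) <= s.+1)%N.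
Proof.
move=> hj; rewrite size_poly_gt0 p_neq0 //= -size_m.
by apply: dvdp_leq; [apply: m_neq0 | apply: p_dvd].
Qed.

Lemma main_iff : self_dual C <->
   ((s * l = 2 * \sum_(j < l) (size (p j)).-1)%N /\
    forall k, (k < l)%N ->
      let k' := if b == 1 then ((2 * l - 2 - k) %% l)%N else ((l - 1 - k) %% l)%N in
      exists t t' : {poly F},
        [/\ t %% m != 0, t' %% m != 0,
            recip (m %/ p k) %% m = (t * p k') %% m &
            p k %% m = (t' * recip (m %/ p k')) %% m]).
Proof.
rewrite selfdual_iff; split.
  move=> H; split.
    have D : forall k : 'I_l, ((size (p k)).-1 + (size (p (kp k))).-1 = s)%N.
      move=> k; have hk := ltn_ord k.
      have := @eqp_size _ _ _ (H _ hk); rewrite size_q // => E.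
      have := size_p_bounds _ (kp_lt k); have := size_p_bounds _ hk.
      move: E; move: (size (p k)) (size (p (kp k))) => x y; lia.
    have kinj : injective (fun k : 'I_l => Ordinal (kp_lt k)).
      move=> x y /(congr1 val) /= E; apply: val_inj => /=.
      by rewrite -(kp_inv _ (ltn_ord x)) E kp_inv.
    have R : \sum_(j < l) (size (p j)).-1 = \sum_(j < l) (size (p (kp j))).-1.
      by rewrite (reindex_inj kinj).
    have : (\sum_(j < l) ((size (p j)).-1 + (size (p (kp j))).-1) = s * l)%N.
      by rewrite (eq_bigr _ (fun k _ => D k)) sum_nat_const card_ord mulnC.
    by rewrite big_split /= -R => <-; rewrite addnn mul2n.
  move=> k hk /=; rewrite -/(kp k).
  have /eqpP [[c1 c2] /= /andP [c10 c20] E1] := H _ hk.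
  have /eqpP [[d1 d2] /= /andP [d10 d20] E2] := H _ (kp_lt k).
  rewrite kp_inv // in E2.
  have smallC : forall c : F, c != 0 -> (c%:P %% m != 0).
    move=> c c0; rewrite modp_small ?polyC_eq0 // size_m size_polyC.
    by case: (c != 0); rewrite ltnS.
  exists (d1 / d2)%:P, (c2 / c1)%:P; split.
  - by apply: smallC; rewrite mulf_neq0 ?invr_eq0.
  - by apply: smallC; rewrite mulf_neq0 ?invr_eq0.
  - by congr (_ %% _); rewrite mul_polyC mulrC -scalerA E2 scalerA mulVf // scale1r.
  - by congr (_ %% _); rewrite mul_polyC mulrC -scalerA -E1 scalerA mulVf // scale1r.
move=> [_ H] j hj; apply/andP; split.
  have [t [t' [_ _ E _]]] := H _ (kp_lt j).
  rewrite -/(kp (kp j)) kp_inv // in E.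
  by rewrite (dvdp_mod _ (p_dvd _ hj)) E -dvdp_mod ?p_dvd // dvdp_mull.
have [t [t' [_ _ _ E]]] := H _ hj.
rewrite -/(kp j) in E.
by rewrite (dvdp_mod _ (q_dvd _ hj)) E -dvdp_mod ?q_dvd // dvdp_mull.
Qed.

End Main.


Theorem theorem4 (F : finFieldType) (s l r : nat) (a b w : F)
    (C : {set 'M[F]_(s, l)}) (p : nat -> {poly F}) :
  (0 < s)%N -> (0 < l)%N ->
  (a = 1 \/ a = -1) -> (b = 1 \/ b = -1) ->
  r.-primitive_root b ->
  #|F| = 1 %[mod r * l] ->
  (r * l).-primitive_root w -> w ^+ l = b ->
  is_ideal a b C ->
  (forall j, (j < l)%N ->
     [/\ p j \is monic, p j %| modx s a &
         forall f : {poly F}, (size f <= s)%N ->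
           (@elemR F s l a b f (eta_poly l r w j) \in C <->
            exists g : {poly F}, f = (g * p j) %% modx s a)]) ->
  (self_dual C <->
   ((s * l = 2 * \sum_(j < l) (size (p j)).-1)%N /\
    forall k, (k < l)%N ->
      let k' := if b == 1 then ((2 * l - 2 - k) %% l)%N else ((l - 1 - k) %% l)%N in
      exists t t' : {poly F},
        [/\ t %% modx s a != 0, t' %% modx s a != 0,
            recip (modx s a %/ p k) %% modx s a = (t * p k') %% modx s a &
            p k %% modx s a = (t' * recip (modx s a %/ p k')) %% modx s a])).
Proof.
move=> s0 l0 ha hb hr hq prim wl hC hp.
have a2 : a * a = 1 by case: ha => ->; rewrite ?mulr1 ?mulrNN ?mulr1.
have r0 : (0 < r)%N := prim_order_gt0 hr.
exact: (@main_iff F s l r a b w s0 l0 a2 wl prim r0 hr hb hq C p hC hp).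
Qed.
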